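(* Let $\pi\subset\mathrm{Iso}(\mathbb R^n)$ be a crystallographic group. Then $$\mathcal C_\pi=\mathrm O(n)\cdot \mathrm Z_{\mathsf{GL}(n)}(H_\pi)=\{OP: O\in\mathrm O(n),\ P\in\mathsf{GL}(n,\mathbb R),\ PA=AP\ \forall A\in H_\pi\}.$$
   Context: $\mathrm{Iso}(\mathbb R^n)=\mathrm O(n)\ltimes\mathbb R^n$ with elements $(A,v)$ acting by $x\mapsto Ax+v$; a crystallographic group is a discrete subgroup with compact quotient; $H_\pi=\{A:\exists v,\ (A,v)\in\pi\}\subset\mathrm O(n)$ is its holonomy group. $\mathcal C_\pi=\{A\in\mathsf{GL}(n,\mathbb R):AH_\pi A^{-1}\subset\mathrm O(n)\}$, and $\mathrm Z_{\mathsf{GL}(n)}(H_\pi)$ is the centralizer of $H_\pi$ in $\mathsf{GL}(n,\mathbb R)$. *)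

(* Defs.v *)
From Stdlib Require Import Reals Lra ClassicalEpsilon FunctionalExtensionality.
From HB Require Import structures.
From mathcomp Require Import all_boot all_order all_algebra.
Set Implicit Arguments. Unset Strict Implicit. Unset Printing Implicit Defensive.
Import Order.TTheory GRing.Theory Num.Theory.

Definition Reqb (x y : R) : bool := if Req_EM_T x y then true else false.
Lemma Reqb_axiom : Equality.axiom Reqb.
Proof. by move=> x y; rewrite /Reqb; case: Req_EM_T => h; constructor. Qed.
HB.instance Definition _ := hasDecEq.Build R Reqb_axiom.

Definition Rfind (P : pred R) (n : nat) : option R :=
  match excluded_middle_informative (exists x, P x) with
  | left h => Some (proj1_sig (constructive_indefinite_description _ h))
  | right _ => None
  end.
Lemma Rfind_correct P n x : Rfind P n = Some x -> P x.
Proof.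
rewrite /Rfind; case: excluded_middle_informative => // h [<-].
exact: proj2_sig (constructive_indefinite_description _ h).
Qed.
Lemma Rfind_complete (P : pred R) : (exists x, P x) -> exists n, Rfind P n.
Proof. by move=> h; exists 0%N; rewrite /Rfind; case: excluded_middle_informative. Qed.
Lemma Rfind_ext (P Q : pred R) : P =1 Q -> Rfind P =1 Rfind Q.
Proof.
move=> h; have -> : P = Q by apply: functional_extensionality.
by [].
Qed.
HB.instance Definition _ := hasChoice.Build R Rfind_correct Rfind_complete Rfind_ext.

Lemma R_addrA : forall x y z : R, Rplus x (Rplus y z) = Rplus (Rplus x y) z. Proof. by move=> *; rewrite Rplus_assoc. Qed.
Lemma R_addrC : forall x y : R, Rplus x y = Rplus y x. Proof. exact: Rplus_comm. Qed.
Lemma R_add0r : forall x : R, Rplus R0 x = x. Proof. exact: Rplus_0_l. Qed.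
Lemma R_addNr : forall x : R, Rplus (Ropp x) x = R0. Proof. exact: Rplus_opp_l. Qed.
HB.instance Definition _ :=
  GRing.isZmodule.Build R R_addrA R_addrC R_add0r R_addNr.

Lemma R_mulrA : forall x y z : R, Rmult x (Rmult y z) = Rmult (Rmult x y) z. Proof. by move=> *; rewrite Rmult_assoc. Qed.
Lemma R_mulrC : forall x y : R, Rmult x y = Rmult y x. Proof. exact: Rmult_comm. Qed.
Lemma R_mul1r : forall x : R, Rmult R1 x = x. Proof. exact: Rmult_1_l. Qed.
Lemma R_mulrDl : forall x y z : R, Rmult (Rplus x y) z = Rplus (Rmult x z) (Rmult y z).
Proof. by move=> x y z; rewrite Rmult_plus_distr_r. Qed.
Lemma R_oner_neq0 : R1 != R0.
Proof. by apply/eqP; exact: R1_neq_R0. Qed.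
HB.instance Definition _ := GRing.Zmodule_isComNzRing.Build R
  R_mulrA R_mulrC R_mul1r R_mulrDl R_oner_neq0.

Local Open Scope ring_scope.
Definition Rinvx (x : R) : R := if Reqb x R0 then R0 else Rinv x.
Lemma R_mulVf (x : R) : x != 0 -> (Rinvx x * x = 1)%R.
Proof.
rewrite /Rinvx; case: Reqb_axiom => [-> | h _]; first by rewrite eqxx.
exact: Rinv_l.
Qed.
Lemma R_invr0 : Rinvx 0 = 0.
Proof. by rewrite /Rinvx; case: Reqb_axiom. Qed.
HB.instance Definition _ := GRing.ComNzRing_isField.Build R R_mulVf R_invr0.

Definition Rleb (x y : R) : bool := if Rle_dec x y then true else false.
Definition Rltb (x y : R) : bool := if Rlt_dec x y then true else false.
Lemma RlebP x y : reflect (Rle x y) (Rleb x y).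
Proof. by rewrite /Rleb; case: Rle_dec => h; constructor. Qed.
Lemma RltbP x y : reflect (Rlt x y) (Rltb x y).
Proof. by rewrite /Rltb; case: Rlt_dec => h; constructor. Qed.

Lemma R_le0_add (x y : R) : Rleb 0 x -> Rleb 0 y -> Rleb 0 (x + y).
Proof. move=> /RlebP h1 /RlebP h2; apply/RlebP; rewrite /GRing.add /=; lra. Qed.
Lemma R_le0_mul (x y : R) : Rleb 0 x -> Rleb 0 y -> Rleb 0 (x * y).
Proof. move=> /RlebP h1 /RlebP h2; apply/RlebP; exact: Rmult_le_pos. Qed.
Lemma R_le0_anti (x : R) : Rleb 0 x -> Rleb x 0 -> x = 0.
Proof. move=> /RlebP h1 /RlebP h2; rewrite /GRing.zero /=; lra. Qed.
Lemma R_sub_ge0 (x y : R) : Rleb 0 (y - x) = Rleb x y.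
Proof.
apply/RlebP/RlebP; rewrite /GRing.add /GRing.opp /=; lra.
Qed.
Lemma R_le0_total (x : R) : Rleb 0 x || Rleb x 0.
Proof. by case: (Rle_dec 0 x) => h; apply/orP; [left|right]; apply/RlebP; lra. Qed.
Lemma R_normN (x : R) : Rabs (- x) = Rabs x.
Proof. exact: Rabs_Ropp. Qed.
Lemma R_ge0_norm (x : R) : Rleb 0 x -> Rabs x = x.
Proof. by move=> /RlebP h; rewrite Rabs_right //; lra. Qed.
Lemma R_lt_def (x y : R) : Rltb x y = (y != x) && Rleb x y.
Proof.
apply/RltbP/andP.
  by move=> h; split; [apply/eqP; lra | apply/RlebP; lra].
by case=> /eqP h1 /RlebP h2; lra.
Qed.
HB.instance Definition _ := Num.IntegralDomain_isLeReal.Build R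
  R_le0_add R_le0_mul R_le0_anti R_sub_ge0 R_le0_total R_normN R_ge0_norm R_lt_def.


Definition orth_mx (n : nat) (A : 'M[R]_n) : Prop := A^T *m A = 1%:M.

Definition isom (n : nat) : Type := ('M[R]_n * 'cV[R]_n)%type.
Definition iso_act (n : nat) (g : isom n) (x : 'cV[R]_n) : 'cV[R]_n :=
  g.1 *m x + g.2.
(* Group law of Iso(R^n) = O(n) |x R^n (composition of maps). *)
Definition iso_one (n : nat) : isom n := (1%:M, 0).
Definition iso_mul (n : nat) (g h : isom n) : isom n :=
  (g.1 *m h.1, g.1 *m h.2 + g.2).
Definition iso_inv (n : nat) (g : isom n) : isom n :=
  (g.1^T, - (g.1^T *m g.2)).

Definition is_iso_subgroup (n : nat) (pi : isom n -> Prop) : Prop :=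
  [/\ forall g, pi g -> orth_mx g.1,
      pi (iso_one n),
      forall g h, pi g -> pi h -> pi (iso_mul g h) &
      forall g, pi g -> pi (iso_inv g)].

(* h lies in the open box of radius eps around g, for the (product)
   topology of Iso(R^n) as a subspace of M_n(R) x R^n *)
Definition iso_close (n : nat) (eps : R) (g h : isom n) : Prop :=
  (forall i j, `|h.1 i j - g.1 i j| < eps) /\ (forall i, `|h.2 i 0 - g.2 i 0| < eps).

Definition iso_discrete (n : nat) (pi : isom n -> Prop) : Prop :=
  forall g, pi g -> exists2 eps : R, 0 < eps &
    forall h, pi h -> iso_close eps g h -> h = g.

(* the quotient R^n / pi is compact: some compact set (a closed cube)
   meets every pi-orbit, i.e. its pi-translates cover R^n *)
Definition iso_cocompact (n : nat) (pi : isom n -> Prop) : Prop :=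
  exists r : R, forall x : 'cV[R]_n, exists2 g, pi g &
    forall i, `|(iso_act g x) i 0| <= r.

Definition crystallographic (n : nat) (pi : isom n -> Prop) : Prop :=
  [/\ is_iso_subgroup pi, iso_discrete pi & iso_cocompact pi].

Definition holonomy (n : nat) (pi : isom n -> Prop) (A : 'M[R]_n) : Prop :=
  exists v, pi (A, v).

Definition Cpi (n : nat) (pi : isom n -> Prop) (A : 'M[R]_n) : Prop :=
  A \in unitmx /\ forall h, holonomy pi h -> orth_mx (A *m h *m invmx A).

Definition centralizer_GL (n : nat) (pi : isom n -> Prop) (P : 'M[R]_n) : Prop :=
  P \in unitmx /\ forall h, holonomy pi h -> P *m h = h *m P.

(* Main.v *)
Require Import Defs.
From Stdlib Require Import Reals Lra FunctionalExtensionality.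
From HB Require Import structures.
From mathcomp Require Import all_boot all_order all_algebra.
From mathcomp Require Import complex.
Set Implicit Arguments. Unset Strict Implicit. Unset Printing Implicit Defensive.
Import Order.TTheory GRing.Theory Num.Theory.
Local Open Scope ring_scope.

Lemma horner_continuity (p : {poly R}) : continuity (fun x => p.[x]).
Proof.
elim/poly_ind: p => [|q c IH].
  by apply: continuity_const => x y; rewrite !horner0.
have -> : (fun x => (q * 'X + c%:P).[x]) =
    plus_fct (mult_fct (fun x => q.[x]) id) (fct_cte c).
  by apply: functional_extensionality => x; rewrite hornerMXaddC.
apply: continuity_plus; last by apply: continuity_const.
apply: continuity_mult => //; exact: derivable_continuous derivable_id.
Qed.

Lemma R_poly_ivt : Num.real_closed_axiom R.
Proof.
move=> p a b /RlebP hab /andP[/RlebP ha /RlebP hb].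
have [ea|na] := Req_EM_T p.[a] 0.
  by exists a; [apply/andP; split; apply/RlebP; lra | apply/eqP].
have [eb|nb] := Req_EM_T p.[b] 0.
  by exists b; [apply/andP; split; apply/RlebP; lra | apply/eqP].
have hlt : Rlt a b.
  destruct (Rle_lt_or_eq_dec _ _ hab) as [h|h] => //.
  subst; exfalso; apply: na; rewrite /GRing.zero /= in ha hb *; lra.
have [z [hz1 hz2]] := IVT (fun x => p.[x]) a b (horner_continuity p) hlt
  ltac:(rewrite /GRing.zero /= in ha na *; lra) ltac:(rewrite /GRing.zero /= in hb nb *; lra).
by exists z; [apply/andP; split; apply/RlebP; lra | apply/eqP].
Qed.

HB.instance Definition _ := Num.RealField_isClosed.Build R R_poly_ivt.

From mathcomp Require Import spectral sesquilinear.

Lemma horner_conj (K : comUnitRingType) n (U D : 'M[K]_n.+1) p :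
  U \in unitmx -> horner_mx (invmx U *m D *m U) p = invmx U *m horner_mx D p *m U.
Proof.
move=> Uu; elim/poly_ind: p => [|p c IH].
  by rewrite !rmorph0 mulmx0 mul0mx.
rewrite !rmorphD !rmorphM /= !horner_mx_X !horner_mx_C IH -!mulmxE.
rewrite mulmxDr mulmxDl mul_mx_scalar -scalemxAl mulVmx // scalemx1.
congr (_ + _); rewrite !mulmxA mulmxK //.
Qed.

Lemma horner_tr (K : comNzRingType) n (M : 'M[K]_n.+1) p :
  M^T = M -> (horner_mx M p)^T = horner_mx M p.
Proof.
move=> sM; elim/poly_ind: p => [|p c IH]; first by rewrite !rmorph0 trmx0.
rewrite !rmorphD !rmorphM /= !horner_mx_X !horner_mx_C -!mulmxE.
rewrite linearD /= trmx_mul tr_scalar_mx IH sM; congr (_ + _).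
by rewrite (comm_horner_mx p (erefl (M *m M))).
Qed.
Lemma interp (F : fieldType) (s : seq F) (g : F -> F) :
  exists q : {poly F}, forall x, x \in s -> q.[x] = g x.
Proof.
elim: s => [|x s [q Hq]]; first by exists 0.
have [xs|xs] := boolP (x \in s).
  by exists q => y; rewrite inE => /orP[/eqP->|]; [exact: Hq|exact: Hq].
pose P := \prod_(y <- s) ('X - y%:P).
have Pn : P.[x] != 0.
  rewrite horner_prod prodf_seq_neq0; apply/allP => y ys /=.
  by rewrite hornerXsubC subr_eq0; apply: contra xs => /eqP->.
exists (q + ((g x - q.[x]) / P.[x]) *: P) => y; rewrite inE => /orP[/eqP->|ys].
  by rewrite hornerD hornerZ mulfVK // addrC subrK.
rewrite hornerD hornerZ Hq //.
have -> : P.[y] = 0.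
  rewrite horner_prod (big_rem y) //= hornerXsubC subrr mul0r //.
by rewrite mulr0 addr0.
Qed.

Local Open Scope sesquilinear_scope.
Local Open Scope complex_scope.
Local Open Scope ring_scope.
Lemma key n (A : 'M[R]_n.+1) : exists q : {poly R},
  horner_mx (A^T *m A) q *m horner_mx (A^T *m A) q = A^T *m A.
Proof.
set M := A^T *m A.
have Msym : M^T = M by rewrite /M trmx_mul trmxK.
pose Ac := map_mx (real_complex R) A.
pose Mc := map_mx (real_complex R) M.
have McE : Mc = Ac^T *m Ac by rewrite /Mc /M map_mxM map_trmx.
have realC : forall x : R, (x%:C)^* = x%:C.
  by move=> x; apply: conj_Creal; apply/complex_realP; exists x.
have AcH : Ac ^t* = Ac^T by apply/matrixP => i j; rewrite !mxE realC.
have McH : Mc ^t* = Mc.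
  have Mij : forall i j, M j i = M i j by move=> i j; rewrite -{1}Msym mxE.
  apply/matrixP => i j; rewrite [LHS]mxE [in LHS]mxE [in LHS]mxE [RHS]mxE realC Mij //.
have Mnorm : Mc \is normalmx by apply/normalmxP; rewrite McH.
set U := spectralmx Mc; set d := spectral_diag Mc.
have Uu : U \is unitarymx := spectral_unitarymx Mc.
have Uinv := unitarymx_unit Uu.
have /orthomx_spectralP E := Mnorm.
have DE : diag_mx d = U *m Mc *m invmx U.
  by rewrite [in RHS]E !mulmxA mulmxV // mul1mx mulmxK.
have dge0 : forall i, 0 <= d 0 i.
  move=> i; have : diag_mx d i i = (U *m Mc *m invmx U) i i by rewrite DE.
  rewrite mxE eqxx mulr1n => ->.
  rewrite invmx_unitary // McE.
  set V := Ac *m U ^t*.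
  have -> : U *m (Ac^T *m Ac) *m U^t* = V^t* *m V.
    by rewrite /V trmx_mul map_mxM trmxCK AcH !mulmxA.
  rewrite mxE; apply: sumr_ge0 => k _; rewrite !mxE mulrC; exact: mul_conjC_ge0.
pose r i := complex.Re (d 0 i).
have dr : forall i, d 0 i = (r i)%:C.
  move=> i; have := dge0 i; rewrite lecE /r; case: (d 0 i) => a b /= /andP[/eqP H _]. by rewrite H.
have r0 : forall i, 0 <= r i.
  move=> i; have := dge0 i; rewrite lecE => /andP[_]; rewrite /r.
  by have -> : complex.Re (0 : R[i]) = 0 by [].
have [q Hq] := interp [seq r i | i <- enum 'I_n.+1] Num.sqrt.
exists q.
apply: (@map_mx_inj _ _ (real_complex R)).
rewrite map_mxM !map_horner_mx -/Mc.
have HS : horner_mx Mc (map_poly (real_complex R) q) =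
    invmx U *m diag_mx (\row_i (Num.sqrt (r i))%:C) *m U.
  rewrite {1}E (horner_conj _ _ Uinv) horner_mx_diag.
  congr (_ *m diag_mx _ *m _); apply/rowP => i; rewrite !mxE dr horner_map Hq.
    reflexivity.
  apply: map_f; exact: mem_enum.
rewrite HS [in RHS]E !mulmxA (mulmxK Uinv); congr (_ *m _).
rewrite -!mulmxA; congr (_ *m _); rewrite mul_diag_mx; apply/matrixP => i j.
rewrite !mxE; case: (i == j); last by rewrite !mulr0n mulr0.
rewrite !mulr1n -rmorphM /= -expr2 (sqr_sqrtr (r0 i)) -(dr i); reflexivity.
Qed.
Lemma orth_inv n (O : 'M[R]_n) : orth_mx O -> O *m O^T = 1%:M /\ O \in unitmx.
Proof. move=> hO; split; first exact: mulmx1C. by have [] := mulmx1_unit hO. Qed.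

Theorem mainTheorem10 (n : nat) (pi : isom n -> Prop) :
  crystallographic pi ->
  forall A : 'M[R]_n,
    Cpi pi A <->
    exists O P : 'M[R]_n, [/\ orth_mx O, centralizer_GL pi P & A = O *m P].
Proof.
move=> [[horth _ _ _] _ _] A.
have Horth : forall h, holonomy pi h -> orth_mx h.
  by move=> h [v hv]; exact: (horth _ hv).
split; last first.
  move=> [O [P [hO [Pu Pc] ->]]].
  have [OOt Ou] := orth_inv hO.
  have Au : O *m P \in unitmx by rewrite unitmx_mul Ou Pu.
  split=> // h hh.
  have -> : O *m P *m h *m invmx (O *m P) = O *m h *m O^T.
    rewrite -[RHS](mulmxK Au); congr (_ *m _).
    by rewrite -!mulmxA [O^T *m _]mulmxA hO mul1mx (Pc h hh).
  rewrite /orth_mx !trmx_mul trmxK !mulmxA -[O *m h^T *m O^T *m O]mulmxA hO mulmx1.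
  rewrite -[O *m h^T *m h]mulmxA (Horth h hh) mulmx1; exact: OOt.
move=> [Au HA].
case: n pi horth Horth A Au HA => [|k] pi horth Horth A Au HA.
  exists 1%:M, A; split.
  - by rewrite /orth_mx trmx1 mulmx1.
  - by split=> // h _; rewrite [h]flatmx0 [A]flatmx0.
  - by rewrite mul1mx.
set M := A^T *m A.
have Msym : M^T = M by rewrite /M trmx_mul trmxK.
have [q Hq] := key A; rewrite -/M in Hq.
set S := horner_mx M q in Hq.
have Ssym : S^T = S by rewrite /S horner_tr.
have Mu : M \in unitmx by rewrite /M unitmx_mul unitmx_tr Au.
have Su : S \in unitmx by move: Mu; rewrite -Hq unitmx_mul => /andP[].
exists (A *m invmx S), S; split.
- rewrite /orth_mx trmx_mul mulmxA -[_ *m A^T *m A]mulmxA -/M -Hq.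
  rewrite mulmxA (mulmxK Su) trmx_inv Ssym (mulVmx Su); reflexivity.
- split=> // h hh.
  have hO := Horth h hh; have [hht _] := orth_inv hO.
  have X := HA h hh; rewrite /orth_mx !trmx_mul trmx_inv in X.
  have X' : invmx A^T *m h^T *m A^T *m A *m h *m invmx A = 1%:M.
    by move: X; rewrite !mulmxA.
  have Atu : A^T \in unitmx by rewrite unitmx_tr.
  have hMh : h^T *m M *m h = M.
    transitivity (A^T *m (invmx A^T *m h^T *m A^T *m A *m h *m invmx A) *m A).
      rewrite /M !mulmxA (mulmxV Atu) mul1mx (mulmxKV Au); reflexivity.
    rewrite X' mulmx1; reflexivity.
  have hM : h *m M = M *m h.
    by rewrite -{1}hMh !mulmxA hht mul1mx.
  have := @comm_mx_horner _ _ h M q hM; rewrite -/S /comm_mx => ->; reflexivity.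
- rewrite mulmxKV //.
Qed.
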